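(* Consider two linear classifiers $h_1(x)=\mathbf 1(w_1^\top x\ge0)$ and $h_2(x)=\mathbf 1(w_2^\top x\ge0)$ on $\mathbb R^2$ with $\|w_i\|_2=1$, and an agent $x^{(0)}\in\mathbb R^2$ with $h_1(x^{(0)})=0$ and $h_2(P_{w_1}(x^{(0)}))=0$. Let $0<\theta<\pi$ satisfy $\cos\theta=-w_1^\top w_2$. Then, for sequential manipulation with Euclidean cost: 1. If $|\tan\theta|>\|P_{w_1}(x^{(0)})\|_2/d_{w_1}(x^{(0)})$, the best response is $x^{(2)}=x^{(1)}=\vec 0$, and $c^*_{\mathrm{seq}}(x^{(0)},\{h_1,h_2\})=\|x^{(0)}\|_2$. 2. If $|\tan\theta|\le\|P_{w_1}(x^{(0)})\|_2/d_{w_1}(x^{(0)})$, the best response is $$x^{(1)}=\Big(1-\frac{d_{w_1}(x^{(0)})}{\|P_{w_1}(x^{(0)})\|_2}|\tan\theta|\Big)P_{w_1}(x^{(0)}),\qquad x^{(2)}=P_{w_2}(x^{(1)}),$$ and $c^*_{\mathrm{seq}}(x^{(0)},\{h_1,h_2\})=d_{w_1}(x^{(0)})|\cos\theta|+\|P_{w_1}(x^{(0)})\|_2\sin\theta$.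
   Context: For a unit vector $w\in\mathbb R^2$: $P_w(x)=x$ if $w^\top x\ge0$ and $P_w(x)=x-(w^\top x)w$ otherwise (projection onto $\{y:w^\top y\ge0\}$); $d_w(x)=0$ if $w^\top x\ge0$ and $d_w(x)=|w^\top x|$ otherwise. The sequential manipulation cost is $c^*_{\mathrm{seq}}(x^{(0)},\{h_1,h_2\})=\min\{\|x^{(1)}-x^{(0)}\|_2+\|x^{(2)}-x^{(1)}\|_2:h_1(x^{(1)})=1,h_2(x^{(2)})=1\}$, and the best response is a minimizing pair $(x^{(1)},x^{(2)})$. *)

(* Defs.v *)
From Stdlib Require Import Reals.
Open Scope R_scope.

Definition pt := (R * R)%type.
Definition dot (u v : pt) : R := fst u * fst v + snd u * snd v.
Definition norm2 (u : pt) : R := sqrt (dot u u).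
Definition vadd (u v : pt) : pt := (fst u + fst v, snd u + snd v).
Definition vsub (u v : pt) : pt := (fst u - fst v, snd u - snd v).
Definition vscale (a : R) (u : pt) : pt := (a * fst u, a * snd u).
Definition vzero : pt := (0, 0).

Definition lin_clf (w : pt) (x : pt) : R := if Rle_dec 0 (dot w x) then 1 else 0.

Definition Pw (w x : pt) : pt :=
  if Rle_dec 0 (dot w x) then x else vsub x (vscale (dot w x) w).

Definition dw (w x : pt) : R :=
  if Rle_dec 0 (dot w x) then 0 else Rabs (dot w x).

Definition seq_feasible (h1 h2 : pt -> R) (x1 x2 : pt) : Prop :=
  h1 x1 = 1 /\ h2 x2 = 1.
Definition seq_cost (x0 x1 x2 : pt) : R :=
  norm2 (vsub x1 x0) + norm2 (vsub x2 x1).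

Definition is_best_response (h1 h2 : pt -> R) (x0 x1 x2 : pt) : Prop :=
  seq_feasible h1 h2 x1 x2 /\
  forall y1 y2, seq_feasible h1 h2 y1 y2 -> seq_cost x0 x1 x2 <= seq_cost x0 y1 y2.

Definition cseq_is (h1 h2 : pt -> R) (x0 : pt) (c : R) : Prop :=
  (exists x1 x2, seq_feasible h1 h2 x1 x2 /\ seq_cost x0 x1 x2 = c) /\
  forall y1 y2, seq_feasible h1 h2 y1 y2 -> c <= seq_cost x0 y1 y2.

(* Main.v *)
Require Import Defs.
From Stdlib Require Import Reals Lra Psatz.
Open Scope R_scope.


Lemma norm2_ge_dot (g z : pt) : dot g g <= 1 -> dot g z <= norm2 z.
Proof.
  destruct g as [g1 g2], z as [z1 z2]; unfold norm2, dot; simpl; intros H.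
  destruct (Rle_dec (g1*z1+g2*z2) 0) as [H0|H0].
  - pose proof (sqrt_pos (z1*z1+z2*z2)); lra.
  - apply Rnot_le_lt in H0. rewrite <- (sqrt_square (g1*z1+g2*z2)) by lra.
    apply sqrt_le_1_alt.
    assert (HC: (g1*z1+g2*z2)*(g1*z1+g2*z2) + (g1*z2-g2*z1)*(g1*z2-g2*z1) = (g1*g1+g2*g2)*(z1*z1+z2*z2)) by ring. pose proof (Rle_0_sqr (g1*z2-g2*z1)). unfold Rsqr in *. assert (0 <= z1*z1+z2*z2) by nra. nra.
Qed.

Lemma clf1 (w y : pt) : lin_clf w y = 1 -> 0 <= dot w y.
Proof. unfold lin_clf; destruct (Rle_dec 0 (dot w y)); lra. Qed.

Lemma clf1' (w y : pt) : 0 <= dot w y -> lin_clf w y = 1.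
Proof. unfold lin_clf; destruct (Rle_dec 0 (dot w y)); lra. Qed.

Lemma clf0 (w y : pt) : lin_clf w y = 0 -> dot w y < 0.
Proof. unfold lin_clf; destruct (Rle_dec 0 (dot w y)); lra. Qed.

Lemma norm1 (w : pt) : norm2 w = 1 -> dot w w = 1.
Proof.
  destruct w as [a b]; unfold norm2, dot; simpl; intros H.
  rewrite <- (sqrt_sqrt (a*a+b*b)) by nra. rewrite H; ring.
Qed.

Lemma lb (c s u v X Y l m : R) (y1 y2 : pt) :
  0 <= l -> 0 <= m -> m <= 1 -> u*u+v*v = 1 ->
  (l*c+m*u)*(l*c+m*u)+(l*s+m*v)*(l*s+m*v) <= 1 ->
  0 <= dot (c,s) y1 -> 0 <= dot (u,v) y2 ->
  -l*(c*X+s*Y) - m*(u*X+v*Y) <= seq_cost (X,Y) y1 y2.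
Proof.
  intros Hl Hm Hm1 Hn Hg H1 H2.
  unfold seq_cost.
  pose proof (norm2_ge_dot (l*c+m*u, l*s+m*v) (vsub y1 (X,Y)) Hg) as E1.
  assert (Hg2 : dot (m*u, m*v) (m*u, m*v) <= 1).
  { unfold dot; simpl. nra. }
  pose proof (norm2_ge_dot _ (vsub y2 y1) Hg2) as E2.
  destruct y1 as [a1 b1], y2 as [a2 b2].
  unfold dot, vsub in *; simpl in *.
  nra.
Qed.

Lemma gnorm c s u v l m C : c*c+s*s=1 -> u*u+v*v=1 -> C = -(c*u+s*v) ->
  (l*c+m*u)*(l*c+m*u)+(l*s+m*v)*(l*s+m*v) = l*l - 2*l*m*C + m*m.
Proof.
  intros H H0 H1; subst C.
  replace ((l*c+m*u)*(l*c+m*u)+(l*s+m*v)*(l*s+m*v)) with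
    (l*l*(c*c+s*s) + 2*l*m*(c*u+s*v) + m*m*(u*u+v*v)) by ring.
  rewrite H, H0; ring.
Qed.

Lemma norm2_zero : norm2 (0 - 0, 0 - 0) = 0.
Proof. unfold norm2, dot; simpl. replace ((0-0)*(0-0)+(0-0)*(0-0)) with 0 by ring. apply sqrt_0. Qed.
Theorem mainTheorem13 (w1 w2 x0 : pt) (theta : R) :
  norm2 w1 = 1 -> norm2 w2 = 1 ->
  lin_clf w1 x0 = 0 ->
  lin_clf w2 (Pw w1 x0) = 0 ->
  0 < theta < PI ->
  cos theta = - dot w1 w2 ->
  ((cos theta = 0 \/ Rabs (tan theta) > norm2 (Pw w1 x0) / dw w1 x0) ->
     is_best_response (lin_clf w1) (lin_clf w2) x0 vzero vzero /\
     cseq_is (lin_clf w1) (lin_clf w2) x0 (norm2 x0)) /\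
  (cos theta <> 0 -> Rabs (tan theta) <= norm2 (Pw w1 x0) / dw w1 x0 ->
     let x1 := vscale (1 - dw w1 x0 / norm2 (Pw w1 x0) * Rabs (tan theta))
                      (Pw w1 x0) in
     let x2 := Pw w2 x1 in
     is_best_response (lin_clf w1) (lin_clf w2) x0 x1 x2 /\
     cseq_is (lin_clf w1) (lin_clf w2) x0
       (dw w1 x0 * Rabs (cos theta) + norm2 (Pw w1 x0) * sin theta)).
Proof.
  intros Hw1 Hw2 H1 H2 Hth Hcos.
  apply norm1 in Hw1; apply norm1 in Hw2.
  apply clf0 in H1.
  destruct w1 as [c s], w2 as [u v], x0 as [X Y].
  unfold dot in Hw1, Hw2, H1, Hcos; simpl in Hw1, Hw2, H1, Hcos.
  assert (HP : Pw (c,s) (X,Y) = (X - (c*X+s*Y)*c, Y - (c*X+s*Y)*s)).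
  { unfold Pw, dot; simpl. destruct (Rle_dec 0 (c*X+s*Y)); [lra|].
    unfold vsub, vscale; simpl. f_equal; ring. }
  assert (Hd : dw (c,s) (X,Y) = - (c*X+s*Y)).
  { unfold dw, dot; simpl. destruct (Rle_dec 0 (c*X+s*Y)); [lra|].
    apply Rabs_left; lra. }
  rewrite HP in H2 |- *. rewrite Hd.
  apply clf0 in H2. unfold dot in H2; simpl in H2.
  set (A := c*X+s*Y) in *.
  set (p1 := X - A*c) in *. set (p2 := Y - A*s) in *.
  set (B := u*p1+v*p2) in *.
  assert (Ha2 : norm2 (p1,p2) * norm2 (p1,p2) = p1*p1+p2*p2).
  { unfold norm2, dot; simpl. apply sqrt_sqrt. nra. }
  assert (Ha0 : 0 <= norm2 (p1,p2)) by apply sqrt_pos.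
  set (a := norm2 (p1,p2)) in *.
  assert (Hr2 : norm2 (X,Y) * norm2 (X,Y) = X*X+Y*Y).
  { unfold norm2, dot; simpl. apply sqrt_sqrt. nra. }
  assert (Hr0 : 0 <= norm2 (X,Y)) by apply sqrt_pos.
  set (r := norm2 (X,Y)) in *.
  set (C := cos theta) in *.
  assert (HS : 0 < sin theta) by (apply sin_gt_0; lra).
  assert (HSC : sin theta * sin theta + C * C = 1).
  { pose proof (sin2_cos2 theta). unfold Rsqr in *. unfold C. lra. }
  set (S := sin theta) in *.
  assert (Hperp : c*p1 + s*p2 = 0).
  { unfold p1, p2, A. replace (c * (X - (c * X + s * Y) * c) + s * (Y - (c * X + s * Y) * s))
      with ((c*X+s*Y)*(1 - (c*c+s*s))) by ring. rewrite Hw1. ring. }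
  set (q := -s*p1 + c*p2).
  assert (Ep1 : p1 = -s*q).
  { unfold q. replace p1 with (c*(c*p1+s*p2) + p1*(1-(c*c+s*s)) - s*(-s*p1+c*p2)) at 1 by ring.
    rewrite Hperp, Hw1. ring. }
  assert (Ep2 : p2 = c*q).
  { unfold q. replace p2 with (s*(c*p1+s*p2) + p2*(1-(c*c+s*s)) + c*(-s*p1+c*p2)) at 1 by ring.
    rewrite Hperp, Hw1. ring. }
  assert (HB2 : B*B = a*a*(S*S)).
  { assert (B = q*(v*c-u*s)) by (unfold B; rewrite Ep1, Ep2; ring).
    rewrite H, Ha2, Ep1, Ep2.
    assert (S*S = 1 - C*C) by lra. rewrite H0, Hcos.
    replace (1 - - (c*u+s*v) * - (c*u+s*v)) with ((u*u+v*v)*(c*c+s*s) - (c*u+s*v)*(c*u+s*v)) by (rewrite Hw1, Hw2; ring).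
    assert (K: - s * q * (- s * q) + c * q * (c * q) = q*q) by (replace (- s * q * (- s * q) + c * q * (c * q)) with (q*q*(c*c+s*s)) by ring; rewrite Hw1; ring). rewrite K. ring. }
  assert (HB : B = - a * S).
  { assert (HaS: 0 <= a*S) by nra. assert (Hz: (B + a*S)*(B - a*S) = 0) by nra. apply Rmult_integral in Hz. destruct Hz; lra. }
  assert (Hapos : 0 < a) by nra.
  assert (Hr2' : r*r = a*a + A*A).
  { rewrite Hr2, Ha2. unfold p1, p2.
    replace ((X - A * c) * (X - A * c) + (Y - A * s) * (Y - A * s))
      with (X*X+Y*Y - 2*A*(c*X+s*Y) + A*A*(c*c+s*s)) by ring.
    rewrite Hw1. fold A. ring. }
  assert (Hrpos : 0 < r) by nra.
  assert (Hw2x : u*X+v*Y = B - A*C).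
  { unfold B, p1, p2. rewrite Hcos. ring. }
  split.
  -
    intros Hcase.
    assert (Hcond : 0 < -A*S + a*C /\ a <= r*S).
    { assert (Hz : C = 0 -> 0 < -A*S + a*C /\ a <= r*S).
      { intro HC0. rewrite HC0 in HSC |- *.
        assert (S = 1).
        { assert (Hq: (S-1)*(S+1) = 0) by nra. apply Rmult_integral in Hq. destruct Hq; lra. }
        rewrite H. split; [lra|]. assert (a*a <= r*r) by nra. nra. }
      destruct Hcase as [HC0|Ht]; [now apply Hz|].
      destruct (Req_dec C 0) as [HC0|HC0]; [now apply Hz|].
      unfold tan in Ht. fold S C in Ht.
      unfold Rdiv in Ht. rewrite Rabs_mult, Rabs_inv in Ht.
      rewrite (Rabs_pos_eq S) in Ht by lra.
      assert (Hm : 0 < Rabs C) by (apply Rabs_pos_lt; exact HC0).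
      assert (Hm2 : Rabs C * Rabs C = C * C) by (rewrite <- Rabs_mult; apply Rabs_pos_eq; nra).
      assert (Ht' : a * Rabs C < -A * S).
      { apply Rgt_lt in Ht.
        apply (Rmult_lt_compat_r (Rabs C * -A)) in Ht; [|nra].
        replace (a * / - A * (Rabs C * - A)) with (a * Rabs C) in Ht by (field; lra).
        replace (S * / Rabs C * (Rabs C * - A)) with (-A*S) in Ht by (field; lra).
        exact Ht. }
      assert (HCl : - Rabs C <= C) by (pose proof (Rle_abs (-C)); rewrite Rabs_Ropp in H; lra).
      split; [nra|].
      assert (E1: r*S*(r*S) - a*a = (-A*S)*(-A*S) - (a*Rabs C)*(a*Rabs C)).
      { replace (r*S*(r*S)) with (r*r*(S*S)) by ring. rewrite Hr2'.
        replace ((a * Rabs C) * (a * Rabs C)) with (a*a*(Rabs C*Rabs C)) by ring. rewrite Hm2.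
        replace (C*C) with (1 - S*S) by lra. ring. }
      assert (a*Rabs C*(a*Rabs C) <= (-A*S)*(-A*S)) by (assert (0 <= a*Rabs C) by nra; nra).
      assert (a*a <= r*S*(r*S)) by lra.
      destruct (Rle_dec a (r*S)) as [Hle|Hle]; [exact Hle|]. apply Rnot_le_lt in Hle. assert (0 <= r*S) by nra. assert (r*S*(r*S) < a*a) by nra. lra. }
    destruct Hcond as [HL HaK].
    set (K := r*S).
    assert (HK : 0 < K) by (unfold K; nra).
    set (L := -A*S + a*C) in *.
    set (l := L / K). set (m := a / K).
    assert (HlK : l*K = L) by (unfold l; field; lra).
    assert (HmK : m*K = a) by (unfold m; field; lra).
    assert (Hl0 : 0 <= l) by (unfold l; apply Rlt_le; apply Rdiv_lt_0_compat; lra).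
    assert (Hm0 : 0 <= m) by (unfold m; apply Rlt_le; apply Rdiv_lt_0_compat; lra).
    assert (Hm1 : m <= 1).
    { unfold m. apply (Rmult_le_reg_r K); [lra|]. replace (a / K * K) with a by (field; lra). unfold K. lra. }
    assert (Hg : (l*c+m*u)*(l*c+m*u)+(l*s+m*v)*(l*s+m*v) <= 1).
    { rewrite (gnorm c s u v l m C Hw1 Hw2 Hcos).
      assert (E : (l*l - 2*l*m*C + m*m)*(K*K) = L*L - 2*L*a*C + a*a)
        by (rewrite <- HlK, <- HmK; ring).
      assert (E2 : L*L - 2*L*a*C + a*a = K*K).
      { unfold L, K. replace ((r*S)*(r*S)) with (r*r*(S*S)) by ring. rewrite Hr2'.
        replace ((- A * S + a * C) * (- A * S + a * C) - 2 * (- A * S + a * C) * a * C + a * a)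
          with (A*A*(S*S) - a*a*(C*C) + a*a) by ring.
        replace (C*C) with (1 - S*S) by lra. ring. }
      rewrite E2 in E.
      assert (l*l - 2*l*m*C + m*m = 1).
      { apply (Rmult_eq_reg_r (K*K)); [|nra]. lra. }
      lra. }
    assert (Hval : -l*(c*X+s*Y) - m*(u*X+v*Y) = r).
    { fold A. rewrite Hw2x, HB. apply (Rmult_eq_reg_r K); [|lra].
      replace ((- l * A - m * (- a * S - A * C)) * K) with (- (l*K) * A + (m*K) * a * S + (m*K) * A * C) by ring.
      rewrite HlK, HmK. unfold L, K.
      replace (- (- A * S + a * C) * A + a * a * S + a * A * C) with ((a*a + A*A)*S) by ring.
      rewrite <- Hr2'. ring. }
    assert (Hfeas : seq_feasible (lin_clf (c, s)) (lin_clf (u, v)) vzero vzero).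
    { split; apply clf1'; unfold dot, vzero; simpl; lra. }
    assert (Hcost : seq_cost (X,Y) vzero vzero = r).
    { unfold seq_cost, vzero, vsub; simpl. rewrite norm2_zero.
      unfold r, norm2, dot; simpl. rewrite Rplus_0_r. f_equal. ring. }
    assert (Hlb : forall y1 y2, seq_feasible (lin_clf (c, s)) (lin_clf (u, v)) y1 y2 -> r <= seq_cost (X,Y) y1 y2).
    { intros y1 y2 [F1 F2]. apply clf1 in F1. apply clf1 in F2.
      rewrite <- Hval. apply lb; assumption. }
    split; split.
    + exact Hfeas.
    + intros y1 y2 Hy. rewrite Hcost. apply Hlb, Hy.
    + exists vzero, vzero. split; assumption.
    + exact Hlb.
  - intros HC0 Ht x1 x2.
    fold C in HC0.
    assert (HT : Rabs (tan theta) = S / Rabs C).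
    { unfold tan. fold S C. unfold Rdiv. rewrite Rabs_mult, Rabs_inv, (Rabs_pos_eq S) by lra. reflexivity. }
    rewrite HT in Ht. unfold x2, x1 in *. clear x1 x2. rewrite HT.
    assert (Hm : 0 < Rabs C) by (apply Rabs_pos_lt; exact HC0).
    assert (Hm2 : Rabs C * Rabs C = C * C) by (rewrite <- Rabs_mult; apply Rabs_pos_eq; nra).
    set (mC := Rabs C) in *.
    set (k := 1 - - A / a * (S / mC)).
    set (e := -A * S / mC).
    assert (Hk : k*a = a - e) by (unfold k, e; field; lra).
    assert (Hk0 : 0 <= k).
    { unfold k. apply (Rmult_le_compat_r (-A)) in Ht; [|lra].
      replace (a / - A * - A) with a in Ht by (field; lra).
      assert (S / mC * - A <= a) by lra.
      apply (Rmult_le_reg_r a); [lra|]. rewrite Rmult_0_l.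
      replace ((1 - - A / a * (S / mC)) * a) with (a - S / mC * - A) by (field; lra). lra. }
    assert (He : e * mC = -A*S) by (unfold e; field; lra).
    assert (HX : X = p1 + A*c) by (unfold p1; ring).
    assert (HY : Y = p2 + A*s) by (unfold p2; ring).
    assert (Hc1 : norm2 (vsub (vscale k (p1,p2)) (X,Y)) = -A / mC).
    { unfold norm2, dot, vsub, vscale; simpl.
      assert (Hpos : 0 <= -A/mC) by (apply Rlt_le, Rdiv_lt_0_compat; lra).
      rewrite <- (sqrt_square (-A/mC)) by exact Hpos. f_equal.
      rewrite HX, HY.
      replace ((k * p1 - (p1 + A * c)) * (k * p1 - (p1 + A * c)) + (k * p2 - (p2 + A * s)) * (k * p2 - (p2 + A * s)))
        with ((k*a - a)*(k*a-a) * 1 + (k-1)*(k-1)*((p1*p1+p2*p2) - a*a) - 2*(k-1)*A*(c*p1+s*p2) + A*A*(c*c+s*s)) by ring.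
      rewrite Hperp, Hw1, <- Ha2, Hk.
      apply (Rmult_eq_reg_r (mC*mC)); [|nra].
      replace (-A/mC * (-A/mC) * (mC*mC)) with (A*A) by (field; lra).
      replace (((a - e - a) * (a - e - a) * 1 + (k - 1) * (k - 1) * (a * a - a * a) - 2 * (k - 1) * A * 0 + A * A * 1) * (mC * mC))
        with ((e*mC)*(e*mC) + A*A*(mC*mC)) by ring.
      rewrite He, Hm2. replace (C*C) with (1 - S*S) by lra. ring. }
    assert (Hdx1 : dot (u,v) (vscale k (p1,p2)) = k*B) by (unfold dot, vscale, B; simpl; ring).
    assert (HkB : k*B = - (k*a)*S) by (rewrite HB; ring).
    assert (Hx2 : lin_clf (u,v) (Pw (u,v) (vscale k (p1,p2))) = 1 /\ norm2 (vsub (Pw (u,v) (vscale k (p1,p2))) (vscale k (p1,p2))) = (k*a)*S).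
    { unfold Pw. rewrite Hdx1. destruct (Rle_dec 0 (k*B)) as [H0|H0].
      - assert (k*a*S = 0) by nra.
        split; [apply clf1'; rewrite Hdx1; lra|].
        rewrite H. unfold vsub, vscale; simpl. rewrite !Rminus_diag. unfold norm2, dot; simpl. replace (0*0+0*0) with 0 by ring. apply sqrt_0.
      - split.
        + apply clf1'. unfold dot, vsub, vscale in *; simpl in *.
          replace (u * (k * p1 - k * B * u) + v * (k * p2 - k * B * v)) with (k*(u*p1+v*p2) - k*B*(u*u+v*v)) by ring.
          fold B. rewrite Hw2. lra.
        + unfold norm2, dot, vsub, vscale; simpl.
          replace ((k * p1 - k * B * u - k * p1) * (k * p1 - k * B * u - k * p1) +
                   (k * p2 - k * B * v - k * p2) * (k * p2 - k * B * v - k * p2))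
            with ((k*B)*(k*B)*(u*u+v*v)) by ring.
          rewrite Hw2, Rmult_1_r, HkB.
          replace (- (k*a) * S * (- (k*a) * S)) with ((k*a*S)*(k*a*S)) by ring.
          apply sqrt_square. assert (0 <= k*a) by nra. nra. }
    destruct Hx2 as [Hh2 Hc2].
    assert (Hfeas : seq_feasible (lin_clf (c, s)) (lin_clf (u, v)) (vscale k (p1,p2)) (Pw (u,v) (vscale k (p1,p2)))).
    { split; [|exact Hh2]. apply clf1'. unfold dot, vscale; simpl.
      replace (c * (k * p1) + s * (k * p2)) with (k*(c*p1+s*p2)) by ring. rewrite Hperp. lra. }
    assert (Hcost : seq_cost (X,Y) (vscale k (p1,p2)) (Pw (u,v) (vscale k (p1,p2))) = -A * mC + a*S).
    { unfold seq_cost. rewrite Hc1, Hc2, Hk.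
      apply (Rmult_eq_reg_r mC); [|lra].
      replace ((- A / mC + (a - e) * S) * mC) with (-A + a*S*mC - (e*mC)*S) by (field; lra).
      rewrite He. replace ((- A * mC + a * S) * mC) with (-A*(mC*mC) + a*S*mC) by ring.
      rewrite Hm2. replace (C*C) with (1 - S*S) by lra. ring. }
    assert (HCl : - mC <= C) by (pose proof (Rle_abs (-C)); rewrite Rabs_Ropp in H; unfold mC; lra).
    assert (HCu : C <= mC) by (apply Rle_abs).
    assert (Hlb : forall y1 y2, seq_feasible (lin_clf (c, s)) (lin_clf (u, v)) y1 y2 -> -A * mC + a*S <= seq_cost (X,Y) y1 y2).
    { intros y1 y2 [F1 F2]. apply clf1 in F1. apply clf1 in F2.
      assert (Hval : -(mC + C)*(c*X+s*Y) - 1*(u*X+v*Y) = -A * mC + a*S).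
      { fold A. rewrite Hw2x, HB. ring. }
      rewrite <- Hval. apply lb; try assumption; try lra.
      rewrite (gnorm c s u v (mC + C) 1 C Hw1 Hw2 Hcos).
      replace ((mC + C) * (mC + C) - 2 * (mC + C) * 1 * C + 1 * 1) with (mC*mC - C*C + 1) by ring.
      rewrite Hm2. lra. }
    split; split.
    + exact Hfeas.
    + intros y1 y2 Hy. rewrite Hcost. apply Hlb, Hy.
    + eexists _, _. split; [exact Hfeas| exact Hcost].
    + exact Hlb.
Qed.
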